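(* Let $(X,\gamma)$ be a probability space and let $E_i\subseteq X$, $i\in\mathbb N$, be pairwise independent measurable sets with $\sum_{i=1}^\infty\gamma(E_i)=\infty$. Then for every measurable $E\subseteq X$ and every $\varepsilon>0$ there exists a positive integer $i$ such that $\gamma(E\cap E_i)>(\gamma(E)-\varepsilon)\gamma(E_i)$. *)

(* Defs.v *)
From Stdlib Require Import Reals.
Open Scope R_scope.

Record ProbSpace (X : Type) := {
  measurable : (X -> Prop) -> Prop;
  prob : (X -> Prop) -> R;
  measurable_full : measurable (fun _ => True);
  measurable_compl : forall A, measurable A -> measurable (fun x => ~ A x);
  measurable_bigcup : forall A : nat -> X -> Prop,
      (forall n, measurable (A n)) -> measurable (fun x => exists n, A n x);
  prob_ge0 : forall A, measurable A -> 0 <= prob A;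
  prob_full : prob (fun _ => True) = 1;
  prob_sigma_additive : forall A : nat -> X -> Prop,
      (forall n, measurable (A n)) ->
      (forall m n, m <> n -> forall x, A m x -> A n x -> False) ->
      infinite_sum (fun n => prob (A n)) (prob (fun x => exists n, A n x))
}.

Arguments measurable {X} _ _.
Arguments prob {X} _ _.

Definition pairwise_independent {X : Type} (P : ProbSpace X)
  (E : nat -> X -> Prop) : Prop :=
  forall i j : nat, i <> j ->
    prob P (fun x => E i x /\ E j x) = prob P (E i) * prob P (E j).

(* Main.v *)
Require Import Defs.
From Stdlib Require Import Reals Lra Lia Psatz Classical FunctionalExtensionality PropExtensionality.
Open Scope R_scope.

Lemma pred_ext {X} (A B : X -> Prop) : (forall x, A x <-> B x) -> A = B.
Proof. intro H; apply functional_extensionality; intro x; apply propositional_extensionality; auto. Qed.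

Lemma prob_ext {X} (P : ProbSpace X) (A B : X -> Prop) : (forall x, A x <-> B x) -> prob P A = prob P B.
Proof. intro H; rewrite (pred_ext A B H); reflexivity. Qed.

Lemma meas_and {X} (P: ProbSpace X) A B : measurable P A -> measurable P B ->
  measurable P (fun x => A x /\ B x).
Proof.
 intros HA HB.
 set (C := fun n : nat => match n with 0%nat => fun x => ~ A x | _ => fun x => ~ B x end).
 assert (HC: forall n, measurable P (C n)) by (intros [|n]; simpl; apply measurable_compl; auto).
 pose proof (measurable_compl _ P _ (measurable_bigcup _ P C HC)) as H.
 replace (fun x => A x /\ B x) with (fun x => ~ (exists n, C n x)); auto.
 apply pred_ext; intro x; split.
 - intro H1. split; apply NNPP; intro H2; apply H1; [exists 0%nat | exists 1%nat]; simpl; auto.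
 - intros [H1 H2] [[|n] Hn]; simpl in Hn; auto.
Qed.

Lemma meas_empty {X} (P : ProbSpace X) : measurable P (fun _ => False).
Proof.
 replace (fun _ : X => False) with (fun x : X => ~ True) by (apply pred_ext; tauto).
 apply measurable_compl, measurable_full.
Qed.

Lemma prob_empty {X} (P : ProbSpace X) : prob P (fun _ => False) = 0.
Proof.
 pose proof (prob_sigma_additive _ P (fun _ _ => False) (fun _ => meas_empty P)
   (fun m n _ x h _ => h)) as H.
 replace (fun x : X => exists n : nat, False) with (fun _ : X => False) in H
   by (apply pred_ext; intros x; split; [tauto | intros [_ h]; exact h]).
 assert (Hp: 0 <= prob P (fun _ => False)) by apply (prob_ge0 _ P _ (meas_empty P)).
 destruct (Req_dec (prob P (fun _ => False)) 0) as [|Hne]; auto.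
 destruct (H (prob P (fun _ => False)/2)) as [N HN]; [lra|].
 pose proof (HN N (le_n _)) as H1. pose proof (HN (S N) (le_S _ _ (le_n _))) as H2.
 simpl in H2. unfold Rdist in *.
 revert H1 H2. generalize (sum_f_R0 (fun _ => prob P (fun _ => False)) N). intros s H1 H2.
 exfalso. apply Rabs_def2 in H1. apply Rabs_def2 in H2. lra.
Qed.

Lemma prob_split {X} (P : ProbSpace X) Sa T : measurable P Sa -> measurable P T ->
  prob P Sa = prob P (fun x => Sa x /\ T x) + prob P (fun x => Sa x /\ ~ T x).
Proof.
 intros HS HT.
 set (C := fun n : nat => match n with 0%nat => fun x => Sa x /\ T x
   | 1%nat => fun x => Sa x /\ ~ T x | _ => fun _ => False end).
 assert (HC: forall n, measurable P (C n)).
 { intros [|[|n]]; simpl. apply meas_and; auto. apply meas_and; auto; apply measurable_compl; auto.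
   apply meas_empty. }
 assert (Hd: forall m n, m <> n -> forall x, C m x -> C n x -> False).
 { intros [|[|m]] [|[|n]] Hmn x; simpl; try tauto; exfalso; apply Hmn; reflexivity. }
 pose proof (prob_sigma_additive _ P C HC Hd) as H.
 replace (fun x => exists n, C n x) with Sa in H.
 2:{ apply pred_ext; intro x; split.
     - intro h; destruct (classic (T x)); [exists 0%nat | exists 1%nat]; simpl; tauto.
     - intros [[|[|n]] h]; simpl in h; tauto. }
 apply (uniqueness_sum _ _ _ H).
 intros eps He. exists 1%nat. intros n Hn.
 destruct n as [|k]; [lia|].
 assert (E: sum_f_R0 (fun n => prob P (C n)) (S k) = prob P (C 0%nat) + prob P (C 1%nat)).
 { induction k. simpl. reflexivity. simpl sum_f_R0 in *. rewrite IHk by lia. simpl.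
   rewrite prob_empty. ring. }
 rewrite E. unfold Rdist. simpl. replace (_ - _) with 0 by ring. rewrite Rabs_R0. lra.
Qed.

Lemma split3 {X} (P : ProbSpace X) Sa T S1 S2 : measurable P Sa -> measurable P T ->
  (forall x, S1 x <-> Sa x /\ T x) -> (forall x, S2 x <-> Sa x /\ ~ T x) ->
  prob P Sa = prob P S1 + prob P S2.
Proof.
 intros HS HT H1 H2. rewrite (prob_split P Sa T HS HT).
 rewrite (prob_ext P S1 _ H1), (prob_ext P S2 _ H2). reflexivity.
Qed.

Fixpoint sumn (f : nat -> R) (m : nat) : R :=
  match m with O => 0 | S m' => f O + sumn (fun k => f (S k)) m' end.

Lemma sumn_S f m : sumn f (S m) = f O + sumn (fun k => f (S k)) m.
Proof. reflexivity. Qed.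

Lemma sumn_ext m : forall f g, (forall k, (k < m)%nat -> f k = g k) -> sumn f m = sumn g m.
Proof.
 induction m; intros f g H; simpl; auto. rewrite (H 0%nat) by lia. f_equal.
 apply IHm. intros; apply H; lia.
Qed.

Lemma sumn_le m : forall f g, (forall k, (k < m)%nat -> f k <= g k) -> sumn f m <= sumn g m.
Proof.
 induction m; intros f g H; simpl; [lra|]. apply Rplus_le_compat. apply H; lia.
 apply IHm. intros; apply H; lia.
Qed.

Lemma sumn_plus m : forall f g, sumn (fun k => f k + g k) m = sumn f m + sumn g m.
Proof. induction m; intros; simpl; [ring|]. rewrite IHm. ring. Qed.

Lemma sumn_scal m : forall a f, sumn (fun k => a * f k) m = a * sumn f m.
Proof. induction m; intros; simpl; [ring|]. rewrite IHm. ring. Qed.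

Lemma sumn_last m : forall f, sumn f (S m) = sumn f m + f m.
Proof.
 induction m; intros f. simpl; ring.
 change (sumn f (S (S m))) with (f 0%nat + sumn (fun k => f (S k)) (S m)).
 rewrite IHm. simpl. ring.
Qed.

Lemma sumn_sum f N : sumn f (S N) = sum_f_R0 f N.
Proof. induction N. simpl; ring. rewrite sumn_last, IHN. reflexivity. Qed.

Lemma sumn_zero m : sumn (fun _ => 0) m = 0.
Proof. induction m; simpl; [ring|]. rewrite IHm; ring. Qed.

Lemma sumn_delta m : forall k p, (k < m)%nat -> sumn (fun l => if Nat.eqb k l then p else 0) m = p.
Proof.
 induction m; intros k p Hk; [lia|]. destruct k; simpl.
 - rewrite sumn_zero. ring.
 - rewrite IHm by lia. ring.
Qed.
Definition Q {X} (P : ProbSpace X) (F : nat -> X -> Prop) (c : nat -> R) (m : nat) (d : R) (G : X -> Prop) : R :=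
  d * d * prob P G
  + 2 * d * sumn (fun k => c k * prob P (fun x => F k x /\ G x)) m
  + sumn (fun k => sumn (fun l => c k * c l * prob P (fun x => F k x /\ F l x /\ G x)) m) m.

Lemma Q_nonneg {X} (P : ProbSpace X) m : forall F c d G, (forall k, measurable P (F k)) ->
  measurable P G -> 0 <= Q P F c m d G.
Proof.
 induction m; intros F c d G HF HG.
 - unfold Q; simpl. pose proof (prob_ge0 _ P G HG). nra.
 - set (G1 := fun x => G x /\ F 0%nat x). set (G2 := fun x => G x /\ ~ F 0%nat x).
   assert (HG1: measurable P G1) by (apply meas_and; auto).
   assert (HG2: measurable P G2) by (apply meas_and; auto; apply measurable_compl; auto).
   pose proof (IHm (fun k => F (S k)) (fun k => c (S k)) (d + c 0%nat) G1 (fun k => HF (S k)) HG1).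
   pose proof (IHm (fun k => F (S k)) (fun k => c (S k)) d G2 (fun k => HF (S k)) HG2).
   unfold Q in *. simpl.
   assert (e1: prob P G = prob P G1 + prob P G2)
     by (apply (split3 P G (F 0%nat)); auto; intro; unfold G1, G2; tauto).
   assert (e2: prob P (fun x => F 0%nat x /\ G x) = prob P G1)
     by (apply prob_ext; intro; unfold G1; tauto).
   assert (e3: prob P (fun x => F 0%nat x /\ F 0%nat x /\ G x) = prob P G1)
     by (apply prob_ext; intro; unfold G1; tauto).
   assert (e4: sumn (fun k => c (S k) * prob P (fun x => F (S k) x /\ G x)) m =
     sumn (fun k => c (S k) * prob P (fun x => F (S k) x /\ G1 x)) m +
     sumn (fun k => c (S k) * prob P (fun x => F (S k) x /\ G2 x)) m).
   { rewrite <- sumn_plus. apply sumn_ext. intros k _.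
     rewrite (split3 P (fun x => F (S k) x /\ G x) (F 0%nat) (fun x => F (S k) x /\ G1 x)
        (fun x => F (S k) x /\ G2 x)); [ring| | | |]; auto.
     apply meas_and; auto. all: intro; unfold G1, G2; tauto. }
   assert (e5: sumn (fun k => c 0%nat * c (S k) * prob P (fun x => F 0%nat x /\ F (S k) x /\ G x)) m
     = c 0%nat * sumn (fun k => c (S k) * prob P (fun x => F (S k) x /\ G1 x)) m).
   { rewrite <- sumn_scal. apply sumn_ext. intros k _.
     rewrite (prob_ext P _ (fun x => F (S k) x /\ G1 x)); [ring|]. intro; unfold G1; tauto. }
   assert (e6: sumn (fun k => c (S k) * c 0%nat * prob P (fun x => F (S k) x /\ F 0%nat x /\ G x) +
      sumn (fun l => c (S k) * c (S l) * prob P (fun x => F (S k) x /\ F (S l) x /\ G x)) m) m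
     = c 0%nat * sumn (fun k => c (S k) * prob P (fun x => F (S k) x /\ G1 x)) m
       + sumn (fun k => sumn (fun l => c (S k) * c (S l) * prob P (fun x => F (S k) x /\ F (S l) x /\ G1 x)) m) m
       + sumn (fun k => sumn (fun l => c (S k) * c (S l) * prob P (fun x => F (S k) x /\ F (S l) x /\ G2 x)) m) m).
   { rewrite <- sumn_scal, <- !sumn_plus. apply sumn_ext. intros k _.
     rewrite (prob_ext P (fun x => F (S k) x /\ F 0%nat x /\ G x) (fun x => F (S k) x /\ G1 x))
       by (intro; unfold G1; tauto).
     assert (ei: sumn (fun l => c (S k) * c (S l) * prob P (fun x => F (S k) x /\ F (S l) x /\ G x)) m
       = sumn (fun l => c (S k) * c (S l) * prob P (fun x => F (S k) x /\ F (S l) x /\ G1 x)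
         + c (S k) * c (S l) * prob P (fun x => F (S k) x /\ F (S l) x /\ G2 x)) m).
     { apply sumn_ext. intros l _.
       rewrite (split3 P (fun x => F (S k) x /\ F (S l) x /\ G x) (F 0%nat)
        (fun x => F (S k) x /\ F (S l) x /\ G1 x) (fun x => F (S k) x /\ F (S l) x /\ G2 x)); [ring| | | |]; auto.
       apply meas_and; auto; apply meas_and; auto. all: intro; unfold G1, G2; tauto. }
     rewrite ei, sumn_plus. ring. }
   rewrite e1, e2, e3, e4, e5, e6. nra.
Qed.

Theorem mainTheorem11 (X : Type) (P : ProbSpace X) (E : nat -> X -> Prop)
  (hEm : forall i, measurable P (E i))
  (hind : pairwise_independent P E)
  (hdiv : cv_infty (fun n => sum_f_R0 (fun k => prob P (E (S k))) n))
  (A : X -> Prop) (hA : measurable P A) (eps : R) (heps : 0 < eps) :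
  exists i : nat, (1 <= i)%nat /\
    prob P (fun x => A x /\ E i x) > (prob P A - eps) * prob P (E i).
Proof.
 destruct (classic (exists i, (1 <= i)%nat /\ prob P (fun x => A x /\ E i x) > (prob P A - eps) * prob P (E i))) as [H|H]; [exact H|].
 exfalso.
 assert (Hle: forall i, (1 <= i)%nat -> prob P (fun x => A x /\ E i x) <= (prob P A - eps) * prob P (E i)).
 { intros i Hi. apply Rnot_gt_le. intro Hg. apply H. exists i; auto. }
 destruct (hdiv (1 / (eps * eps))) as [N HN].
 specialize (HN N (le_n N)). simpl in HN.
 rewrite <- sumn_sum in HN.
 remember (S N) as M.
 set (S0 := sumn (fun k => prob P (E (S k))) M) in *.
 set (a := prob P A).
 assert (Heps2: eps*eps*S0 > 1).
 { assert (Hne: eps*eps <> 0) by nra.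
   assert (Hq: eps*eps*(1/(eps*eps)) = 1) by (field; lra).
   apply Rmult_lt_compat_l with (r := eps*eps) in HN; nra. }
 set (Sq := sumn (fun k => prob P (fun x => A x /\ E (S k) x)) M).
 assert (HSq: Sq <= (a - eps) * S0).
 { unfold Sq, S0. rewrite <- sumn_scal. apply sumn_le. intros k _.
   apply Hle. lia. }
 assert (HF: forall k, measurable P ((fun k => match k with 0%nat => A | S j => E (S j) end) k))
   by (intros [|k]; simpl; auto).
 pose proof (Q_nonneg P (S M) (fun k => match k with 0%nat => A | S j => E (S j) end)
   (fun k => match k with 0%nat => 1 | S _ => eps end) (-(a + eps * S0)) (fun _ => True)
   HF (measurable_full _ P)) as HQ.
 unfold Q in HQ; simpl in HQ.
 rewrite (prob_full _ P) in HQ.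
 rewrite (prob_ext P (fun x => A x /\ True) A) in HQ by (intro; tauto).
 rewrite (prob_ext P (fun x => A x /\ A x /\ True) A) in HQ by (intro; tauto).
 fold a in HQ.
 assert (e1: sumn (fun k => eps * prob P (fun x => E (S k) x /\ True)) M = eps * S0).
 { unfold S0. rewrite <- sumn_scal. apply sumn_ext. intros k _.
   rewrite (prob_ext P _ (E (S k))) by (intro; tauto). reflexivity. }
 assert (e2: sumn (fun k => 1 * eps * prob P (fun x => A x /\ E (S k) x /\ True)) M = eps * Sq).
 { unfold Sq. rewrite <- sumn_scal. apply sumn_ext. intros k _.
   rewrite (prob_ext P _ (fun x => A x /\ E (S k) x)) by (intro; tauto). ring. }
 assert (e3: sumn (fun k => eps * 1 * prob P (fun x => E (S k) x /\ A x /\ True) +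
        sumn (fun l => eps * eps * prob P (fun x => E (S k) x /\ E (S l) x /\ True)) M) M
     <= eps * Sq + eps * eps * (S0 * S0 + S0)).
 { apply Rle_trans with (sumn (fun k => eps * prob P (fun x => A x /\ E (S k) x)
      + eps * eps * (S0 * prob P (E (S k)) + prob P (E (S k)))) M).
   - apply sumn_le. intros k Hk. apply Rplus_le_compat.
     + rewrite (prob_ext P _ (fun x => A x /\ E (S k) x)) by (intro; tauto). lra.
     + apply Rle_trans with (sumn (fun l => eps * eps * (prob P (E (S k)) * prob P (E (S l))
          + (if Nat.eqb k l then prob P (E (S k)) else 0))) M).
       * apply sumn_le. intros l _. apply Rmult_le_compat_l; [nra|].
         destruct (Nat.eqb_spec k l) as [<-|Hkl].
         -- rewrite (prob_ext P _ (E (S k))) by (intro; tauto).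
            pose proof (prob_ge0 _ P _ (hEm (S k))). nra.
         -- rewrite (prob_ext P _ (fun x => E (S k) x /\ E (S l) x)) by (intro; tauto).
            rewrite hind by lia. lra.
       * rewrite sumn_scal, sumn_plus, sumn_scal, sumn_delta by lia.
         fold S0. lra.
   - rewrite sumn_plus, !sumn_scal, sumn_plus, sumn_scal. fold Sq S0. lra. }
 rewrite e1, e2 in HQ.
 assert (Hsq: eps * Sq <= eps * ((a - eps) * S0)) by (apply Rmult_le_compat_l; lra).
 assert (Ha: a - a * a <= 1/4) by nra.
 nra.
Qed.
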